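(* Let $Q$ be a Dynkin quiver equipped with a group $G$ of automorphisms, and let $\gamma,\beta\in\Phi(Q)$ be roots such that $\pi(\gamma)=\pi(\beta)$. Then there exists $g\in G$ such that $\gamma=g\cdot\beta$.
   Context: A Dynkin quiver is a finite quiver whose underlying graph is a Dynkin diagram of type $\mathbb A_n,\mathbb D_n,\mathbb E_6,\mathbb E_7,\mathbb E_8$, with vertex set $Q_0$. $\Phi(Q)\subset\mathbb Z^{Q_0}$ is its root system, roots written in the basis of simple roots $\alpha_i$, $i\in Q_0$. An automorphism of $Q$ is a permutation $g$ of $Q_0$ preserving $b_{ij}$ = #arrows $i\to j$ $-$ #arrows $j\to i$. $G$ acts on $\mathbb Z^{Q_0}$ by $g\cdot(d_i)_{i}=(d_{g^{-1}i})_i$. With $\overline Q_0$ the set of $G$-orbits, $\pi:\mathbb Z^{Q_0}\to\mathbb Z^{\overline Q_0}$ is $(d_i)_i\mapsto(\sum_{j\in\mathbf i}d_j)_{\mathbf i\in\overline Q_0}$. *)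

(* Defs.v *)
From mathcomp Require Import all_boot all_order all_algebra all_fingroup.
Set Implicit Arguments. Unset Strict Implicit. Unset Printing Implicit Defensive.
Import GRing.Theory Num.Theory.
Local Open Scope ring_scope.

(* A finite quiver on the vertex set V: arr i j = number of arrows i -> j. *)
Definition quiver (V : finType) := V -> V -> nat.

Definition bmat (V : finType) (Q : quiver V) (i j : V) : int :=
  (Q i j)%:Z - (Q j i)%:Z.

Definition adjA (n : nat) (i j : 'I_n) : bool :=
  (i.+1 == j :> nat) || (j.+1 == i :> nat).
Definition adjD (n : nat) (i j : 'I_n) : bool :=
  let pathv k := (k <= n - 2)%N in
  [|| [&& pathv i, pathv j & (i.+1 == j :> nat) || (j.+1 == i :> nat)],
      (i == n.-1 :> nat) && (j == (n - 3)%N :> nat) |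
      (j == n.-1 :> nat) && (i == (n - 3)%N :> nat)].
Definition adjE (n : nat) (i j : 'I_n) : bool :=
  let pathv k := (k <= n - 2)%N in
  [|| [&& pathv i, pathv j & (i.+1 == j :> nat) || (j.+1 == i :> nat)],
      (i == n.-1 :> nat) && (j == 2%N :> nat) |
      (j == n.-1 :> nat) && (i == 2%N :> nat)].

Definition dynkin_diagram (n : nat) (e : 'I_n -> 'I_n -> bool) : Prop :=
  [/\ (1 <= n)%N & e = @adjA n] \/
  [/\ (4 <= n)%N & e = @adjD n] \/
  [/\ (n \in [:: 6; 7; 8]%N) & e = @adjE n].

Definition dynkin_quiver (V : finType) (Q : quiver V) : Prop :=
  exists n (e : 'I_n -> 'I_n -> bool) (f : V -> 'I_n),
    [/\ dynkin_diagram e, bijective f,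
        forall i, Q i i = 0%N &
        forall i j, i != j -> (Q i j + Q j i)%N = nat_of_bool (e (f i) (f j))].

Definition quiver_aut (V : finType) (Q : quiver V) (g : {perm V}) : Prop :=
  forall i j, bmat Q (g i) (g j) = bmat Q i j.

Definition dimvec (V : finType) := {ffun V -> int}.

Definition simple_root (V : finType) (k : V) : dimvec V :=
  [ffun i => (i == k)%:Z].

(* Symmetric bilinear (Cartan/Euler-symmetrized) form:
   (alpha_i, alpha_j) = 2 delta_ij - #edges between i and j. *)
Definition cartan_form (V : finType) (Q : quiver V) (d e : dimvec V) : int :=
  \sum_i \sum_j ((2 * (i == j))%:Z - (Q i j + Q j i)%:Z) * d i * e j.

Definition sreflect (V : finType) (Q : quiver V) (k : V) (d : dimvec V)
  : dimvec V :=
  [ffun i => d i - cartan_form Q d (simple_root k) * simple_root k i].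

(* Root system Phi(Q): the orbit of the simple roots under the Weyl group. *)
Inductive is_root (V : finType) (Q : quiver V) : dimvec V -> Prop :=
| root_simple k : is_root Q (simple_root k)
| root_reflect k d : is_root Q d -> is_root Q (sreflect Q k d).

Definition vact (V : finType) (g : {perm V}) (d : dimvec V) : dimvec V :=
  [ffun i => d ((g^-1)%g i)].

(* pi(d) evaluated at the G-orbit of i: sum of d_j over j in that orbit. *)
Definition orbit_sum (V : finType) (G : {group {perm V}}) (d : dimvec V)
  (i : V) : int :=
  \sum_(j in orbit 'P G i) d j.

(* Main.v *)
Require Import Defs.
From mathcomp Require Import all_boot all_order all_algebra all_fingroup.
From mathcomp Require Import zify ring lra.

Module Helpers.
Set Implicit Arguments. Unset Strict Implicit. Unset Printing Implicit Defensive.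
Import GRing.Theory Num.Theory.
Local Open Scope ring_scope.

Definition cX (E : nat -> nat -> bool) (a b : nat) : int :=
  (2 * (a == b))%:Z - (E a b)%:Z.

Definition qf (n : nat) (E : nat -> nat -> bool) (Y : nat -> int) : int :=
  \sum_(0 <= a < n) \sum_(0 <= b < n) cX E a b * Y a * Y b.

Lemma qf_split m E Y : (forall a b, E a b = E b a) ->
  qf m.+1 E Y = qf m E Y + 2 * (\sum_(0 <= a < m) cX E a m * Y a) * Y m
     + cX E m m * Y m * Y m.
Proof.
move=> Es; rewrite /qf big_nat_recr //= big_nat_recr //=.
under eq_bigr => a _ do rewrite big_nat_recr //=.
rewrite big_split /=.
have -> : \sum_(0 <= i < m) cX E m i * Y m * Y i =
          \sum_(0 <= i < m) cX E i m * Y i * Y m.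
  by apply: eq_bigr => i _; rewrite /cX Es eq_sym; ring.
have -> : \sum_(0 <= i < m) cX E i m * Y i * Y m =
          (\sum_(0 <= i < m) cX E i m * Y i) * Y m by rewrite mulr_suml.
ring.
Qed.

Definition EA (a b : nat) : bool := (a.+1 == b) || (b.+1 == a).

Lemma EA_sym a b : EA a b = EA b a.
Proof. by rewrite /EA orbC. Qed.

Lemma sum_cA k Y : \sum_(0 <= a < k.+1) cX EA a k.+1 * Y a = - Y k.
Proof.
rewrite big_nat_recr //= big1_seq ?add0r.
  have -> : cX EA k k.+1 = -1 by rewrite /cX /EA; lia.
  ring.
move=> a; rewrite mem_index_iota => /andP[_ ha].
have -> : cX EA a k.+1 = 0 by rewrite /cX /EA; lia.
by rewrite !mul0r.
Qed.

Definition Zsum k (Y : nat -> int) : int :=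
  Y 0%N ^+ 2 + \sum_(0 <= a < k) (Y a - Y a.+1) ^+ 2.

Lemma qfA k Y : qf k.+1 EA Y = Zsum k Y + Y k ^+ 2.
Proof.
elim: k => [|k IH].
  rewrite /qf /Zsum !big_nat1 big_geq // /cX /EA /=; ring.
rewrite qf_split; last exact: EA_sym.
rewrite IH sum_cA /Zsum big_nat_recr //=.
have -> : cX EA k.+1 k.+1 = 2 by rewrite /cX /EA; lia.
ring.
Qed.

Lemma Zsum_ge0 k Y : 0 <= Zsum k Y.
Proof.
rewrite /Zsum addr_ge0 ?sqr_ge0 //; apply: sumr_ge0 => i _; exact: sqr_ge0.
Qed.

Lemma Zsum_eq0 k Y : Zsum k Y = 0 -> forall i, (i <= k)%N -> Y i = 0.
Proof.
elim: k => [|k IH].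
  by rewrite /Zsum big_geq // addr0 => /eqP; rewrite sqrf_eq0 => /eqP h [|].
rewrite /Zsum big_nat_recr //= addrA => /eqP.
rewrite paddr_eq0 ?sqr_ge0 ?Zsum_ge0 // sqrf_eq0 subr_eq0 => /andP[/eqP h1 /eqP h2].
have IH' := IH h1.
move=> i; rewrite leq_eqVlt => /orP[/eqP -> | hi].
  by rewrite -h2 IH'.
by apply: IH'.
Qed.

Lemma sum_nat_single n j (F : nat -> int) : (j < n)%N ->
  (forall a, (a < n)%N -> a != j -> F a = 0) -> \sum_(0 <= a < n) F a = F j.
Proof.
move=> hj H; rewrite big_mkord (bigD1 (Ordinal hj)) //= big1 ?addr0 //.
move=> i /= hi; apply: H => //; apply: contra hi => /eqP hi.
Qed.

Definition ED (n : nat) (i j : nat) : bool :=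
  let pathv k := (k <= n - 2)%N in
  [|| [&& pathv i, pathv j & (i.+1 == j :> nat) || (j.+1 == i :> nat)],
      (i == n.-1 :> nat) && (j == (n - 3)%N :> nat) |
      (j == n.-1 :> nat) && (i == (n - 3)%N :> nat)].

Definition EE (n : nat) (i j : nat) : bool :=
  let pathv k := (k <= n - 2)%N in
  [|| [&& pathv i, pathv j & (i.+1 == j :> nat) || (j.+1 == i :> nat)],
      (i == n.-1 :> nat) && (j == 2%N :> nat) |
      (j == n.-1 :> nat) && (i == 2%N :> nat)].

Lemma qfD k Y : qf k.+4 (ED k.+4) Y = Zsum k.+1 Y +
   (Y k.+1 - Y k.+2 - Y k.+3) ^+ 2 + (Y k.+2 - Y k.+3) ^+ 2.
Proof.
have Es : forall a b, ED k.+4 a b = ED k.+4 b a by move=> a b; rewrite /ED; lia.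
rewrite qf_split // qf_split //.
have -> : qf k.+2 (ED k.+4) Y = qf k.+2 EA Y.
  apply: eq_big_nat => a ha; apply: eq_big_nat => b hb.
  by congr (_ * _ * _); rewrite /cX /ED /EA; lia.
rewrite qfA.
rewrite (@sum_nat_single _ k.+1); last first.
- by move=> a ha hne; rewrite /cX /ED; lia.
- by [].
rewrite (@sum_nat_single _ k.+1); last first.
- by move=> a ha hne; rewrite /cX /ED; lia.
- by [].
have -> : cX (ED k.+4) k.+1 k.+2 = -1 by rewrite /cX /ED; lia.
have -> : cX (ED k.+4) k.+1 k.+3 = -1 by rewrite /cX /ED; lia.
have -> : cX (ED k.+4) k.+2 k.+2 = 2 by rewrite /cX /ED; lia.
have -> : cX (ED k.+4) k.+3 k.+3 = 2 by rewrite /cX /ED; lia.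
ring.
Qed.

Lemma qfE k Y : (2 <= k)%N -> qf k.+2 (EE k.+2) Y = Zsum k Y + Y k ^+ 2
   - 2 * Y 2%N * Y k.+1 + 2 * Y k.+1 ^+ 2.
Proof.
move=> hk.
have Es : forall a b, EE k.+2 a b = EE k.+2 b a by move=> a b; rewrite /EE; lia.
rewrite qf_split //.
have -> : qf k.+1 (EE k.+2) Y = qf k.+1 EA Y.
  apply: eq_big_nat => a ha; apply: eq_big_nat => b hb.
  by congr (_ * _ * _); rewrite /cX /EE /EA; lia.
rewrite qfA.
rewrite (@sum_nat_single _ 2); last first.
- by move=> a ha hne; rewrite /cX /EE; lia.
- by [].
have -> : cX (EE k.+2) 2 k.+1 = -1 by rewrite /cX /EE; lia.
have -> : cX (EE k.+2) k.+1 k.+1 = 2 by rewrite /cX /EE; lia.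
ring.
Qed.
Lemma sq0 (x : int) : x ^+ 2 = 0 -> x = 0.
Proof. by move/eqP; rewrite sqrf_eq0 => /eqP. Qed.

Ltac sqset s p d t :=
  set s := t; have p : 0 <= s := sqr_ge0 _; have d : s = 0 -> _ := @sq0 _;
  clearbody s.

Lemma posE8 Y : (exists i, (i < 8)%N /\ Y i != 0) -> 0 < qf 8 (EE 8) Y.
Proof.
move=> [i [hi hY]]; rewrite (@qfE 6) // /Zsum.
rewrite !big_nat_recr //= big_geq //.
set F := (X in 0 < X).
have h : 60 * F = 30*(2*Y 7%N - Y 2%N)^+2 + 30*(2*Y 0%N - Y 1%N)^+2 + 10*(3*Y 1%N - 2*Y 2%N)^+2
  + 30*(2*Y 6%N - Y 5%N)^+2 + 10*(3*Y 5%N - 2*Y 4%N)^+2 + 5*(4*Y 4%N-3*Y 3%N)^+2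
  + 3*(5*Y 3%N - 4*Y 2%N)^+2 + 2 * Y 2%N ^+2.
  rewrite /F; ring.
clearbody F; move: h.
sqset s1 p1 d1 ((2*Y 7%N - Y 2%N)^+2).
sqset s2 p2 d2 ((2*Y 0%N - Y 1%N)^+2).
sqset s3 p3 d3 ((3*Y 1%N - 2*Y 2%N)^+2).
sqset s4 p4 d4 ((2*Y 6%N - Y 5%N)^+2).
sqset s5 p5 d5 ((3*Y 5%N - 2*Y 4%N)^+2).
sqset s6 p6 d6 ((4*Y 4%N-3*Y 3%N)^+2).
sqset s7 p7 d7 ((5*Y 3%N - 4*Y 2%N)^+2).
sqset s8 p8 d8 (Y 2%N ^+2).
move=> h.
rewrite lt0r; apply/andP; split; last by lia.
apply/eqP => hF; rewrite hF in h.
have q1 := d1 ltac:(lia). have q2 := d2 ltac:(lia). have q3 := d3 ltac:(lia).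
have q4 := d4 ltac:(lia). have q5 := d5 ltac:(lia). have q6 := d6 ltac:(lia).
have q7 := d7 ltac:(lia). have q8 := d8 ltac:(lia).
move: hY; do 8 (case: i hi => [|i] hi; first by move=> /eqP; apply; lia).
by [].
Qed.

Lemma posE6 Y : (exists i, (i < 6)%N /\ Y i != 0) -> 0 < qf 6 (EE 6) Y.
Proof.
move=> [i [hi hY]]; rewrite (@qfE 4) // /Zsum.
rewrite !big_nat_recr //= big_geq //.
set F := (X in 0 < X).
have h : 6 * F = 3*(2*Y 5%N - Y 2%N)^+2 + 3*(2*Y 0%N - Y 1%N)^+2 + (3*Y 1%N - 2*Y 2%N)^+2
  + 3*(2*Y 4%N - Y 3%N)^+2 + (3*Y 3%N - 2*Y 2%N)^+2 + Y 2%N ^+2.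
  rewrite /F; ring.
clearbody F; move: h.
sqset s1 p1 d1 ((2*Y 5%N - Y 2%N)^+2).
sqset s2 p2 d2 ((2*Y 0%N - Y 1%N)^+2).
sqset s3 p3 d3 ((3*Y 1%N - 2*Y 2%N)^+2).
sqset s4 p4 d4 ((2*Y 4%N - Y 3%N)^+2).
sqset s5 p5 d5 ((3*Y 3%N - 2*Y 2%N)^+2).
sqset s6 p6 d6 (Y 2%N ^+2).
move=> h.
rewrite lt0r; apply/andP; split; last by lia.
apply/eqP => hF; rewrite hF in h.
have q1 := d1 ltac:(lia). have q2 := d2 ltac:(lia). have q3 := d3 ltac:(lia).
have q4 := d4 ltac:(lia). have q5 := d5 ltac:(lia). have q6 := d6 ltac:(lia).
move: hY; do 6 (case: i hi => [|i] hi; first by move=> /eqP; apply; lia).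
by [].
Qed.

Lemma posE7 Y : (exists i, (i < 7)%N /\ Y i != 0) -> 0 < qf 7 (EE 7) Y.
Proof.
move=> [i [hi hY]]; rewrite (@qfE 5) // /Zsum.
rewrite !big_nat_recr //= big_geq //.
set F := (X in 0 < X).
have h : 12 * F = 6*(2*Y 6%N - Y 2%N)^+2 + 6*(2*Y 0%N - Y 1%N)^+2 + 2*(3*Y 1%N - 2*Y 2%N)^+2
  + 6*(2*Y 5%N - Y 4%N)^+2 + 2*(3*Y 4%N - 2*Y 3%N)^+2 + (4*Y 3%N - 3*Y 2%N)^+2 + Y 2%N ^+2.
  rewrite /F; ring.
clearbody F; move: h.
sqset s1 p1 d1 ((2*Y 6%N - Y 2%N)^+2).
sqset s2 p2 d2 ((2*Y 0%N - Y 1%N)^+2).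
sqset s3 p3 d3 ((3*Y 1%N - 2*Y 2%N)^+2).
sqset s4 p4 d4 ((2*Y 5%N - Y 4%N)^+2).
sqset s5 p5 d5 ((3*Y 4%N - 2*Y 3%N)^+2).
sqset s6 p6 d6 ((4*Y 3%N - 3*Y 2%N)^+2).
sqset s7 p7 d7 (Y 2%N ^+2).
move=> h.
rewrite lt0r; apply/andP; split; last by lia.
apply/eqP => hF; rewrite hF in h.
have q1 := d1 ltac:(lia). have q2 := d2 ltac:(lia). have q3 := d3 ltac:(lia).
have q4 := d4 ltac:(lia). have q5 := d5 ltac:(lia). have q6 := d6 ltac:(lia).
have q7 := d7 ltac:(lia).
move: hY; do 7 (case: i hi => [|i] hi; first by move=> /eqP; apply; lia).
by [].
Qed.

Lemma posA n Y : (1 <= n)%N -> (exists i, (i < n)%N /\ Y i != 0) -> 0 < qf n EA Y.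
Proof.
case: n => [//|k] _ [i [hi hY]]; rewrite qfA.
rewrite lt0r addr_ge0 ?Zsum_ge0 ?sqr_ge0 // andbT.
apply/eqP => /eqP; rewrite paddr_eq0 ?Zsum_ge0 ?sqr_ge0 // => /andP[/eqP h _].
by move: hY; rewrite (Zsum_eq0 h) ?eqxx.
Qed.

Lemma sum3_eq0 (a b c : int) : 0 <= a -> 0 <= b -> 0 <= c -> a + b + c = 0 ->
  [/\ a = 0, b = 0 & c = 0].
Proof. by move=> *; split; lia. Qed.

Lemma posD n Y : (4 <= n)%N -> (exists i, (i < n)%N /\ Y i != 0) -> 0 < qf n (ED n) Y.
Proof.
case: n => [|[|[|[|k]]]] // _ [i [hi hY]]; rewrite qfD.
have pa := Zsum_ge0 k.+1 Y.
have pb := sqr_ge0 (Y k.+1 - Y k.+2 - Y k.+3).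
have pc := sqr_ge0 (Y k.+2 - Y k.+3).
rewrite lt0r; apply/andP; split; last by apply: addr_ge0 => //; apply: addr_ge0.
apply/eqP => h; have [h0 /sq0 h1 /sq0 h2] := sum3_eq0 pa pb pc h.
have z := Zsum_eq0 h0.
have ec : Y k.+1 = 0 by rewrite z.
have ea : Y k.+2 = 0 by lia.
have eb : Y k.+3 = 0 by lia.
move: hY; case: (ltnP i k.+2) => hik; first by rewrite z.
have : (i = k.+2 \/ i = k.+3)%N by lia.
by case=> ->; rewrite ?ea ?eb.
Qed.


Section Forms.
Variable V : finType.
Variable Q : quiver V.
Local Notation B := (cartan_form Q).

Definition cQ (i j : V) : int := (2 * (i == j))%:Z - (Q i j + Q j i)%:Z.

Lemma cfE d e : B d e = \sum_i \sum_j cQ i j * d i * e j.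
Proof. by []. Qed.

Lemma cf_sym d e : B d e = B e d.
Proof.
rewrite !cfE exchange_big; apply: eq_bigr => i _; apply: eq_bigr => j _.
rewrite /cQ (eq_sym j i) (addnC (Q j i)); ring.
Qed.

Lemma cf_lcl s t (d1 d2 e : dimvec V) :
  B [ffun i => s * d1 i + t * d2 i] e = s * B d1 e + t * B d2 e.
Proof.
rewrite !cfE !mulr_sumr -big_split; apply: eq_bigr => i _.
rewrite !mulr_sumr -big_split; apply: eq_bigr => j _; rewrite ffunE /=; ring.
Qed.

Lemma cf_lcr s t (d1 d2 e : dimvec V) :
  B e [ffun i => s * d1 i + t * d2 i] = s * B e d1 + t * B e d2.
Proof. by rewrite cf_sym cf_lcl !(cf_sym e). Qed.

Lemma cf_sumr (I : finType) (P : pred I) (F : I -> dimvec V) e :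
  B e [ffun i => \sum_(g | P g) F g i] = \sum_(g | P g) B e (F g).
Proof.
rewrite cfE (exchange_big _ _ _ _ _ (fun g i => \sum_j cQ i j * e i * F g j)).
apply: eq_bigr => i _; rewrite (exchange_big _ _ _ _ _ (fun g j => cQ i j * e i * F g j)).
apply: eq_bigr => j _; rewrite ffunE mulr_sumr //.
Qed.

Lemma sum_ind (F : V -> int) k : \sum_i F i * (i == k)%:Z = F k.
Proof.
rewrite (bigD1 k) //= eqxx mulr1 big1 ?addr0 // => i /negbTE ->; by rewrite mulr0.
Qed.

Lemma cf_simple k : (Q k k = 0)%N -> B (simple_root k) (simple_root k) = 2.
Proof.
move=> hk; rewrite cfE.
rewrite (eq_bigr (fun i => cQ i k * (i == k)%:Z)).
  by rewrite sum_ind /cQ eqxx hk.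
move=> i _; rewrite ffunE.
rewrite (eq_bigr (fun j => (cQ i j * (i == k)%:Z) * (j == k)%:Z)) ?sum_ind //.
by move=> j _; rewrite ffunE.
Qed.

Lemma cf_refl k d : (Q k k = 0)%N ->
  B (sreflect Q k d) (sreflect Q k d) = B d d.
Proof.
move=> hk.
have -> : sreflect Q k d =
   [ffun i => 1 * d i + (- B d (simple_root k)) * simple_root k i].
  by apply/ffunP => i; rewrite !ffunE; ring.
rewrite cf_lcl !cf_lcr cf_simple // (cf_sym (simple_root k) d); ring.
Qed.

Lemma root_norm d : (forall i, Q i i = 0)%N -> is_root Q d -> B d d = 2.
Proof.
move=> h0; elim => [k|k e _ IH]; first exact: cf_simple.
by rewrite cf_refl.
Qed.

Lemma cf_even (x : dimvec V) : exists k, B x x = 2 * k.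
Proof.
exists (\sum_i x i * x i - \sum_i \sum_j (Q i j)%:Z * x i * x j).
have e1 : B x x = \sum_i \sum_j ((2 * (i == j))%:Z * x i * x j)
     - \sum_i \sum_j (Q i j)%:Z * x i * x j - \sum_i \sum_j (Q j i)%:Z * x i * x j.
  rewrite cfE -!sumrB; apply: eq_bigr => i _; rewrite -!sumrB.
  by apply: eq_bigr => j _; rewrite /cQ PoszD; ring.
have e2 : \sum_i \sum_j (Q j i)%:Z * x i * x j = \sum_i \sum_j (Q i j)%:Z * x i * x j.
  rewrite exchange_big; apply: eq_bigr => i _; apply: eq_bigr => j _; ring.
have e3 : \sum_i \sum_j ((2 * (i == j))%:Z * x i * x j) = 2 * \sum_i x i * x i.
  rewrite mulr_sumr; apply: eq_bigr => i _.
  rewrite (bigD1 i) //= eqxx big1 ?addr0; first by rewrite muln1 mulrA.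
  by move=> j; rewrite eq_sym => /negbTE ->; rewrite muln0 !mul0r.
rewrite e1 e2 e3; ring.
Qed.

Lemma cf_offdiag (x y : dimvec V) : (forall i, 0 <= x i) -> (forall i, 0 <= y i) ->
  (forall i, x i * y i = 0) -> B x y <= 0.
Proof.
move=> hx hy hxy; rewrite cfE; apply: sumr_le0 => i _; apply: sumr_le0 => j _.
case: (eqVneq i j) => [<-|nij]; first by rewrite -mulrA hxy mulr0.
rewrite /cQ (negbTE nij) muln0 sub0r -mulrA mulNr oppr_le0.
by apply: mulr_ge0 => //; apply: mulr_ge0.
Qed.

End Forms.


Section Main.
Variable V : finType.
Variable Q : quiver V.
Local Notation B := (cartan_form Q).

Lemma cQ_aut (hle : forall i j, (Q i j + Q j i <= 1)%N) (g : {perm V}) :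
  quiver_aut Q g -> forall i j, cQ Q (g i) (g j) = cQ Q i j.
Proof.
move=> hg i j; rewrite /cQ (inj_eq perm_inj).
have := hg i j; rewrite /bmat; have := hle i j; have := hle (g i) (g j); lia.
Qed.

Lemma cf_vact (g : {perm V}) (d e : dimvec V) :
  (forall i j, cQ Q (g i) (g j) = cQ Q i j) -> B (vact g d) (vact g e) = B d e.
Proof.
move=> H; rewrite !cfE (reindex_inj (@perm_inj _ g)); apply: eq_bigr => i _.
rewrite (reindex_inj (@perm_inj _ g)); apply: eq_bigr => j _.
by rewrite !ffunE !permK H.
Qed.

Lemma dyn_pos (hQ : dynkin_quiver Q) (x : dimvec V) :
  (exists i, x i != 0) -> 0 < B x x.
Proof.
case: hQ => n [e [f [hd [g fK gK] h0 hQ]]] [i hi].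
have hee : forall a : 'I_n, e a a = false.
  case: hd => [[hn ->]|[[hn ->]|[hn ->]]] a; rewrite /adjA /adjD /adjE; last move: hn; rewrite ?inE; lia.
have hQe : forall i j, (Q i j + Q j i)%N = e (f i) (f j).
  by move=> i' j'; case: (eqVneq i' j') => [->|nij]; [rewrite h0 hee | exact: hQ].
pose Y k := oapp (fun a => x (g a)) 0 (insub k).
have hY : forall a : 'I_n, Y a = x (g a) by move=> a; rewrite /Y valK.
have gbij : bijective g by exists f.
have key : forall E : nat -> nat -> bool, (forall a b : 'I_n, e a b = E a b) -> B x x = qf n E Y.
  move=> E hE; rewrite cfE /qf big_mkord (reindex g (onW_bij _ gbij)).
  apply: eq_bigr => a _; rewrite big_mkord (reindex g (onW_bij _ gbij)).
  apply: eq_bigr => b _.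
  by rewrite /cQ /cX hQe !gK (inj_eq (can_inj gK)) hE !hY.
have wit : exists k, (k < n)%N /\ Y k != 0.
  by exists (f i); split => //; rewrite hY fK.
case: hd => [[hn he]|[[hn he]|[hn he]]].
- by rewrite (key EA) ?he //; apply: posA.
- by rewrite (key (ED n)) ?he //; apply: posD.
- rewrite (key (EE n)) ?he //.
  move: hn wit; rewrite !inE => /orP[/eqP ->|/orP[/eqP ->|/eqP ->]].
  + exact: posE6.
  + exact: posE7.
  + exact: posE8.
Qed.


Hypothesis hpos : forall x : dimvec V, (exists i, x i != 0) -> 0 < B x x.

Lemma cf_nz (x : dimvec V) : B x x != 0 -> exists i, x i != 0.
Proof.
move=> hB; case: (boolP [exists i, x i != 0]) => [/existsP //|/existsPn hx].
move: hB; rewrite cfE big1 ?eqxx // => i _; rewrite big1 // => j _.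
by move: (hx i); rewrite negbK => /eqP ->; rewrite mulr0 mul0r.
Qed.

Lemma cf_ge2 (x : dimvec V) : (exists i, x i != 0) -> 2 <= B x x.
Proof. move=> h; have := hpos h; have [k ->] := cf_even Q x; lia. Qed.

Lemma sign_coh (x : dimvec V) : B x x = 2 ->
  (forall i, 0 <= x i) \/ (forall i, x i <= 0).
Proof.
move=> hx.
pose xp : dimvec V := [ffun i => if 0 <= x i then x i else 0].
pose xm : dimvec V := [ffun i => if 0 <= x i then 0 else - x i].
have ex : x = [ffun i => 1 * xp i + (-1) * xm i].
  by apply/ffunP => i; rewrite !ffunE; case: ifP => _; ring.
have hp : forall i, 0 <= xp i by move=> i; rewrite ffunE; case: ifP => // /negbT; lia.
have hm : forall i, 0 <= xm i by move=> i; rewrite ffunE; case: ifP => // /negbT; lia.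
have hpm : forall i, xp i * xm i = 0 by move=> i; rewrite !ffunE; case: ifP => _; ring.
have hoff := cf_offdiag Q hp hm hpm.
have eB : B x x = B xp xp - 2 * B xp xm + B xm xm.
  by rewrite {1 2}ex cf_lcl !cf_lcr (cf_sym Q xm xp); ring.
case: (boolP [exists i, xp i != 0]) => [/existsP hxp|/existsPn hxp]; last first.
  right => i; move: (hxp i); rewrite negbK ffunE; case: ifP => [_ /eqP -> //|/negbT]; lia.
case: (boolP [exists i, xm i != 0]) => [/existsP hxm|/existsPn hxm]; last first.
  left => i; move: (hxm i); rewrite negbK ffunE; case: ifP => [//|/negbT]; lia.
have := cf_ge2 hxp; have := cf_ge2 hxm; lia.
Qed.

End Main.

Section Orb.
Variable V : finType.
Variable G : {group {perm V}}.

Definition Sv (d : dimvec V) : dimvec V := [ffun i => \sum_(g in G) vact g d i].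

Lemma Sv_vact g (d : dimvec V) : g \in G -> Sv (vact g d) = Sv d.
Proof.
move=> hg; apply/ffunP => i; rewrite !ffunE.
rewrite [RHS](reindex_inj (mulgI g)); apply: eq_big => h.
  by rewrite /= groupMl.
by move=> _; rewrite !ffunE invgM permM.
Qed.

Lemma vact_Sv h (d : dimvec V) : h \in G -> vact h (Sv d) = Sv d.
Proof.
move=> hh; apply/ffunP => i; rewrite !ffunE.
rewrite [RHS](reindex_inj (mulIg h)); apply: eq_big => g.
  by rewrite /= groupMr.
by move=> _; rewrite !ffunE invgM permM.
Qed.

Lemma Sv_lc s t (d1 d2 : dimvec V) :
  Sv [ffun i => s * d1 i + t * d2 i] = [ffun i => s * Sv d1 i + t * Sv d2 i].
Proof.
apply/ffunP => i; rewrite !ffunE !mulr_sumr -big_split; apply: eq_bigr => g _.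
by rewrite !ffunE.
Qed.

Lemma Sv_orbit (d : dimvec V) i : Sv d i = (#|('C_G[i | 'P])%g|)%:Z * orbit_sum G d i.
Proof.
rewrite ffunE (reindex_inj invg_inj) /=.
rewrite (eq_big (fun g => g \in G) (fun g => d (g i))); last first.
- by move=> g _; rewrite ffunE invgK.
- by move=> g; rewrite groupV.
rewrite (partition_big (fun g : {perm V} => g i) (fun j => j \in orbit 'P G i)); last first.
  by move=> g hg; apply: (mem_orbit 'P).
rewrite /orbit_sum mulr_sumr; apply: eq_bigr => j hj.
rewrite (eq_bigr (fun _ => d j)); last by move=> g /andP[_ /eqP ->].
rewrite sumr_const -mulr_natl; congr (_ * _).
case/orbitP: hj => a ha <-.
rewrite -(card_rcoset _ a) -(amove_act 'P i (subsetT G) ha) /amove cardsE.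
by rewrite natz.
Qed.

End Orb.

End Helpers.
Import Helpers.
Import GRing.Theory Num.Theory.

Theorem mainTheorem18 (V : finType) (Q : quiver V) (G : {group {perm V}})
  (hQ : dynkin_quiver Q)
  (hG : forall g, g \in G -> quiver_aut Q g)
  (gamma beta : dimvec V)
  (hgamma : is_root Q gamma) (hbeta : is_root Q beta)
  (hpi : forall i : V, orbit_sum G gamma i = orbit_sum G beta i) :
  exists2 g, g \in G & gamma = vact g beta.
Proof.
have h0 : forall i, Q i i = 0%N by case: hQ => n [e [f [_ _ h0 _]]].
have hle : forall i j, (Q i j + Q j i <= 1)%N.
  case: hQ => n [e [f [_ _ _ hQ']]] i j.
  by case: (eqVneq i j) => [->|nij]; [rewrite h0 | rewrite hQ' // leq_b1].
have hpos := dyn_pos hQ.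
have hcQ : forall g, g \in G -> forall i j, cQ Q (g i) (g j) = cQ Q i j.
  by move=> g hg; apply: cQ_aut => //; apply: hG.
have Ng := root_norm h0 hgamma.
have Nb := root_norm h0 hbeta.
have eqS : Sv G gamma = Sv G beta.
  by apply/ffunP => i; rewrite !Sv_orbit hpi.
have Sne : forall x, cartan_form Q x x = 2%R -> exists i, Sv G x i != 0%R.
  move=> x hx.
  have [i hi] : exists i, x i != 0%R by apply: (@cf_nz _ Q); rewrite hx.
  exists i; rewrite ffunE (bigD1 1%g) ?group1 //= ffunE invg1 perm1.
  case: (sign_coh hpos hx) => hs.
  - rewrite paddr_eq0 ?hs ?negb_and ?hi //.
    by apply: sumr_ge0 => g _; rewrite ffunE.
  - rewrite naddr_eq0 ?hs ?negb_and ?hi //.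
    by apply: sumr_le0 => g _; rewrite ffunE.
have hSsum : forall d : dimvec V, forall e : dimvec V,
    cartan_form Q e (Sv G d) = (\sum_(g in G) cartan_form Q e (vact g d))%R.
  move=> d e; exact: (cf_sumr Q (fun g => g \in G) (fun g => vact g d) e).
have pos1 : (0 < cartan_form Q (Sv G gamma) gamma)%R.
  have hS := hpos _ (Sne _ Ng).
  rewrite hSsum in hS.
  rewrite (eq_bigr (fun _ => cartan_form Q (Sv G gamma) gamma)) in hS; last first.
    by move=> h hh; rewrite -{1}(vact_Sv gamma hh) (cf_vact _ _ (hcQ h hh)).
  by rewrite sumr_const pmulrn_lgt0 ?cardG_gt0 in hS.
have sumpos : (0 < \sum_(g in G) cartan_form Q gamma (vact g beta))%R.
  by rewrite -hSsum -eqS cf_sym.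
have [g hg tpos] : exists2 g, g \in G & (0 < cartan_form Q gamma (vact g beta))%R.
  case: (boolP [exists g in G, (0 < cartan_form Q gamma (vact g beta))%R]).
    by move=> /existsP [g /andP[hg hp]]; exists g.
  move=> /existsPn hn; exfalso.
  suff : (\sum_(g in G) cartan_form Q gamma (vact g beta) <= 0)%R by move: sumpos; lia.
  by apply: sumr_le0 => g hg; move: (hn g); rewrite hg /=; lia.
pose delta : dimvec V := [ffun i => 1 * gamma i + (-1) * vact g beta i]%R.
have eB : cartan_form Q delta delta = (4 - 2 * cartan_form Q gamma (vact g beta))%R.
  rewrite cf_lcl !cf_lcr (cf_vact _ _ (hcQ g hg)) Nb Ng (cf_sym Q (vact g beta) gamma); ring.
case: (boolP [exists i, delta i != 0%R]) => [/existsP hd | /existsPn hd]; last first.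
  exists g => //; apply/ffunP => i; move: (hd i); rewrite negbK ffunE => /eqP; lia.
exfalso.
have h2 := cf_ge2 hpos hd.
have [k hk] := cf_even Q delta.
have e2 : cartan_form Q delta delta = 2%R by move: h2 tpos hk; rewrite eB; lia.
have [i hi] := Sne _ e2.
move: hi; rewrite /delta Sv_lc ffunE Sv_vact // eqS.
by rewrite mul1r mulN1r subrr eqxx.
Qed.
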